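(* Let $\ell>0$. For any constant $C_0>0$ and any $\mu_0\in(0,\ell)$ there is some $\mu\in(0,\mu_0)$ such that, with $$\alpha:=\frac{\sqrt\ell-\sqrt\mu}{\sqrt\ell+\sqrt\mu},\qquad q(z)=\ell(z-\alpha)(z-1),\qquad r(z)=-(1+\alpha)z+\alpha,$$ one has $\sup_{\nu\in[\mu,\ell]}\rho\big(q(z)-\nu\, r(z)\big)<1-C_0\mu$.
   Context: For a polynomial $s(z)$, $\rho(s)$ denotes the maximum modulus of a (complex) root of $s$. *)

(* Defs.v *)
From HB Require Import structures.
From mathcomp Require Import all_boot all_order all_algebra.
From mathcomp Require Import complex.
From mathcomp Require Import classical_sets reals.
Set Implicit Arguments. Unset Strict Implicit. Unset Printing Implicit Defensive.
Import Order.TTheory GRing.Theory Num.Theory.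
Local Open Scope ring_scope.
Local Open Scope classical_set_scope.

Definition rho (R : realType) (s : {poly R[i]}) : R :=
  sup [set ComplexField.Normc.normc z | z in [set z : R[i] | root s z]].

Definition alpha (R : realType) (l mu : R) : R :=
  (Num.sqrt l - Num.sqrt mu) / (Num.sqrt l + Num.sqrt mu).

Definition q_hb (R : realType) (l mu : R) : {poly R[i]} :=
  (l%:C)%C%:P * ('X - ((alpha l mu)%:C)%C%:P) * ('X - 1).

Definition r_hb (R : realType) (l mu : R) : {poly R[i]} :=
  (- (1 + alpha l mu)%:C)%C%:P * 'X + ((alpha l mu)%:C)%C%:P.

(* Main.v *)
Require Import Defs.
From HB Require Import structures.
From mathcomp Require Import all_boot all_order all_algebra.
From mathcomp Require Import complex.
From mathcomp Require Import classical_sets reals.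
From mathcomp Require Import ring lra.
Import Order.TTheory GRing.Theory Num.Theory.
Local Open Scope ring_scope.
Local Open Scope classical_set_scope.

Lemma root_eqs (R : realType) (l al nu a b : R) :
  root ((l%:C)%C%:P * ('X - (al%:C)%C%:P) * ('X - 1) - ((nu%:C)%C)%:P *
     ((- (1 + al)%:C)%C%:P * 'X + (al%:C)%C%:P)) (Complex a b) ->
  l * ((a - al) * (a - 1) - b * b) + nu * (1 + al) * a - nu * al = 0 /\
  b * (l * (2 * a - 1 - al) + nu * (1 + al)) = 0.
Proof.
rewrite /root !hornerE /=.
move=> /eqP H. have H1 := congr1 (@complex.Re R) H. have H2 := congr1 (@complex.Im R) H.
simpl in H1, H2.
rewrite ?(mul0r, subr0, oppr0, addr0, mulr0, sub0r, add0r) in H1 H2.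
split.
  apply: (etrans _ H1). ring.
by apply: (etrans _ H2); ring.
Qed.

Lemma key (R : realType) (s al t a b : R) : 0 < s -> s < 1 -> al * (1 + s) = 1 - s -> 0 <= t -> t <= 1 - s ^+ 2 ->
  a * a - b * b - t * (1 + al) * a + t * al = 0 -> b * (2 * a - t * (1 + al)) = 0 ->
  a ^+ 2 + b ^+ 2 <= (1 - s) ^+ 2.
Proof.
move=> s0 s1 hal t0 t1 e1 e2.
have al0 : 0 <= al by nra.
have h1 : (1 + al) * (1 + s) = 2 by lra.
move/eqP: e2; rewrite mulf_eq0 => /orP [/eqP b0| /eqP e2].
- subst b.
  have e3 : ((1 + s) * a - t) ^+ 2 = t * (t - (1 - s ^+ 2)).
    have s1n : 1 + s != 0 by rewrite gt_eqF //; lra.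
    have alE : al = (1 - s) / (1 + s) by rewrite -hal mulfK.
    have E : ((1 + s) * a - t) ^+ 2 - t * (t - (1 - s ^+ 2)) =
       (1 + s) ^+ 2 * (a * a - 0 * 0 - t * (1 + al) * a + t * al).
      by rewrite alE; field.
    by apply/eqP; rewrite -subr_eq0 E e1 mulr0.
  have e4 : (1 + s) * a = t.
    have sq0 : ((1 + s) * a - t) ^+ 2 = 0.
      by apply/le_anti; rewrite sqr_ge0 andbT e3; nra.
    by move/eqP: sq0; rewrite sqrf_eq0 subr_eq0 => /eqP.
  have a0 : 0 <= a by nra.
  have a1 : a <= 1 - s by nra.
  nra.
- move/eqP: e2; rewrite subr_eq0 => /eqP e2.
  rewrite -e2 in e1.
  have hb : b * b = t * al - a * a by lra.
  rewrite !expr2 hb.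
  have h2 : t * al <= (1 - s ^+ 2) * al by rewrite ler_wpM2r.
  have h3 : (1 - s ^+ 2) * al = (1 - s) * (1 - s).
    have -> : 1 - s ^+ 2 = (1 - s) * (1 + s) by ring.
    by rewrite -mulrA [(1 + s) * al]mulrC hal.
  lra.
Qed.

Lemma sup_le_nonneg (R : realType) (E : set R) (b : R) : 0 <= b ->
  (forall x, E x -> x <= b) -> sup E <= b.
Proof.
move=> b0 H; have [->|/set0P ne] := eqVneq E set0; first by rewrite sup0.
by apply: ge_sup.
Qed.

Theorem proposition9 (R : realType) (l : R) (hl : 0 < l) :
  forall (C0 mu0 : R), 0 < C0 -> 0 < mu0 -> mu0 < l ->
  exists mu : R, 0 < mu /\ mu < mu0 /\
    sup [set rho (q_hb l mu - ((nu%:C)%C)%:P * r_hb l mu)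
        | nu in [set nu : R | mu <= nu <= l]] < 1 - C0 * mu.
Proof.
move=> C0 mu0 C00 mu00 mu0l.
set w := Num.sqrt l.
have w0 : 0 < w by rewrite sqrtr_gt0.
have ww : w ^+ 2 = l by rewrite sqr_sqrtr // ltW.
set m := Num.sqrt mu0.
have m0 : 0 < m by rewrite sqrtr_gt0.
have mm : m ^+ 2 = mu0 by rewrite sqr_sqrtr // ltW.
have mw : m < w by rewrite ltr_sqrt.
set v := Num.min (m / 2) (1 / (2 * C0 * w)).
have v0 : 0 < v by rewrite lt_min; apply/andP; split; apply: divr_gt0 => //; nra.
have vm : v <= m / 2 by rewrite ge_min lexx.
have vC : v <= 1 / (2 * C0 * w) by rewrite ge_min lexx orbT.
have vC' : C0 * v * w <= 1 / 2.
  have h : 0 < 2 * C0 * w by nra.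
  rewrite ler_pdivlMr // in vC. 
  lra.
set mu := v ^+ 2.
have sqmu : Num.sqrt mu = v by rewrite sqrtr_sqr ger0_norm // ltW.
have vw : v < w by lra.
set s := v / w.
have s0 : 0 < s by apply: divr_gt0.
have s1 : s < 1 by rewrite ltr_pdivrMr // mul1r.
have wn : w != 0 by rewrite gt_eqF.
have wvn : w + v != 0 by rewrite gt_eqF //; lra.
set al := alpha l mu.
have alE : al = (w - v) / (w + v) by rewrite /al /alpha sqmu.
have hal : al * (1 + s) = 1 - s.
  by rewrite alE /s; field; rewrite wn wvn.
have mul : mu <= l by rewrite -ww /mu; nra.
exists mu; split; first by rewrite exprn_gt0.
split; first by rewrite /mu; nra.
have key2 : 1 - s < 1 - C0 * mu.
  have : C0 * mu = (C0 * v * w) * s by rewrite /mu /s; field.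
  move=> ->; nra.
apply: le_lt_trans key2.
apply: sup_le_nonneg; first lra.
move=> _ [nu /andP [hnu1 hnu2] <-].
apply: sup_le_nonneg; first lra.
move=> _ [[a b] hz <-].
move: hz; rewrite /q_hb /r_hb -/al => /root_eqs [E1 E2].
set t := (l - nu) / l.
have ln : l != 0 by rewrite gt_eqF.
have nuE : nu = l - l * t by rewrite /t; field.
rewrite nuE in E1 E2.
have E1' : a * a - b * b - t * (1 + al) * a + t * al = 0.
  have : l * (a * a - b * b - t * (1 + al) * a + t * al) = 0.
    by apply: etrans E1; ring.
  by move/eqP; rewrite mulf_eq0 (negbTE ln) /= => /eqP.
have E2' : b * (2 * a - t * (1 + al)) = 0.
  have : l * (b * (2 * a - t * (1 + al))) = 0.
    by apply: etrans E2; ring.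
  by move/eqP; rewrite mulf_eq0 (negbTE ln) /= => /eqP.
have t0 : 0 <= t by apply: divr_ge0; lra.
have t1 : t <= 1 - s ^+ 2.
  have -> : s ^+ 2 = mu / l by rewrite /s /mu -ww; field.
  rewrite /t mulrBl divff //.
  rewrite lerD2l lerN2 ler_pM2r ?invr_gt0 //.
have := @key R _ _ _ _ _ s0 s1 hal t0 t1 E1' E2'.
move=> H; rewrite /ComplexField.Normc.normc.
have s1' : 0 <= 1 - s by lra.
by rewrite -(ger0_norm s1') -sqrtr_sqr ler_wsqrtr.
Qed.
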